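(* If $p=p(n)\le \log n/(25n^2)$, then asymptotically almost surely there exists a generator $s\in S$ such that neither $s$ nor $s^{-1}$ occurs in any relation of the random presentation $\Gamma(n,p)=\langle S\mid R\rangle$.
   Context: The random triangular group $\Gamma(n,p)$ is given by a presentation $\langle S\mid R\rangle$, where $|S|=n$ and $R$ contains independently, each with probability $p$, every cyclically reduced word $abc$ of length three over $S\cup S^{-1}$ ($a\neq b^{-1}$, $b\neq c^{-1}$, $c\neq a^{-1}$; distinct words are distinct candidates). Asymptotically almost surely means with probability tending to $1$ as $n\to\infty$. *)

(* Defs.v *)
From HB Require Import structures.
From mathcomp Require Import all_boot all_order all_algebra.
From mathcomp Require Import all_classical all_reals all_analysis.
Set Implicit Arguments. Unset Strict Implicit. Unset Printing Implicit Defensive.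
Import Order.TTheory GRing.Theory Num.Theory.
Local Open Scope ring_scope.

(* A letter over S ∪ S^{-1}, with S = 'I_n: (generator, sign);
   (s, true) stands for s and (s, false) for s^{-1}. *)
Definition letter (n : nat) := ('I_n * bool)%type.
Definition linv (n : nat) (x : letter n) : letter n := (x.1, ~~ x.2).

Definition word (n : nat) := (letter n * letter n * letter n)%type.

Definition cyc_reduced (n : nat) (w : word n) : bool :=
  let: (a, b, c) := w in
  [&& a != linv b, b != linv c & c != linv a].

Definition cands (n : nat) : {set word n} := [set w | cyc_reduced w].

Definition occurs (n : nat) (s : 'I_n) (w : word n) : bool :=
  let: (a, b, c) := w in [|| a.1 == s, b.1 == s | c.1 == s].

Definition free_gen_event (n : nat) (Rel : {set word n}) : bool :=
  [exists s : 'I_n, [forall w in Rel, ~~ occurs s w]].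

(* Probability of an event under Gamma(n,p): each candidate word is put in R
   independently with probability p. *)
Definition prob_Gamma (R : realType) (n : nat) (p : R)
    (E : {set word n} -> bool) : R :=
  \sum_(Rel : {set word n} | Rel \subset cands n)
     p ^+ #|Rel| * (1 - p) ^+ (#|cands n| - #|Rel|) * (E Rel)%:R.

(* Main.v *)
Require Import Defs.
From HB Require Import structures.
From mathcomp Require Import all_boot all_order all_algebra.
From mathcomp Require Import all_classical all_reals all_analysis.
From mathcomp Require Import ring lra zify.
Import Order.TTheory GRing.Theory Num.Theory.
Import numFieldNormedType.Exports.
Local Open Scope ring_scope.

Section Comb.
Variable n : nat.
Definition LT : {set letter n} := [set: letter n].
Definition Ls (s : 'I_n) : {set letter n} := [set x : letter n | x.1 == s].
Definition Lst (s t : 'I_n) : {set letter n} := [set x : letter n | (x.1 == s) || (x.1 == t)].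
Definition Aset' (s : 'I_n) : {set word n} := [set w in cands n | occurs s w].

Lemma card_LT : #|LT| = (n * 2)%N.
Proof. by rewrite /LT cardsT card_prod card_ord card_bool. Qed.

Lemma card_Ls s : (#|Ls s| <= 2)%N.
Proof.
have -> : Ls s = (fun b => (s, b)) @: [set: bool].
  apply/setP => x; rewrite !inE; apply/idP/imsetP => [/eqP <-|[b _ ->]] //.
  by exists x.2; rewrite ?inE //; case: x.
by rewrite (leq_trans (leq_imset_card _ _)) // cardsT card_bool.
Qed.

Lemma card_Lst s t : (#|Lst s t| <= 4)%N.
Proof.
have -> : Lst s t = Ls s :|: Ls t by apply/setP => x; rewrite !inE.
by rewrite (leq_trans (leq_card_setU _ _)) // (leq_add (card_Ls s) (card_Ls t)).
Qed.

Lemma cardX3 (A B D : {set letter n}) :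
  #|finset.setX (finset.setX A B) D| = (#|A| * #|B| * #|D|)%N.
Proof. by rewrite !cardsX. Qed.

Lemma card_A s : (#|Aset' s| <= 24 * n ^ 2)%N.
Proof.
have sub : Aset' s \subset finset.setX (finset.setX (Ls s) LT) LT
    :|: finset.setX (finset.setX LT (Ls s)) LT
    :|: finset.setX (finset.setX LT LT) (Ls s).
  apply/fintype.subsetP => [[[a b] c]]; rewrite !inE /= => /andP[_].
  by case: (a.1 == s); case: (b.1 == s); case: (c.1 == s).
apply: (leq_trans (subset_leq_card sub)).
apply: (leq_trans (leq_card_setU _ _)).
rewrite -/(addn _ _); apply: leq_trans (leq_add (leq_card_setU _ _) (leqnn _)) _.
rewrite !cardX3 card_LT.
have := card_Ls s; set k := #|Ls s| => hk.
have e : (k * (n * 2) * (n * 2) <= 2 * (n*2) * (n*2))%N.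
  by rewrite !leq_mul2r hk !orbT.
have e2 : (n * 2 * k * (n * 2) <= 2 * (n*2) * (n*2))%N.
  by rewrite leq_mul2r (mulnC (n*2)) leq_mul2r hk !orbT.
have e3 : (n * 2 * (n * 2) * k <= n * 2 * (n*2) * 2)%N.
  by rewrite leq_mul2l hk orbT.
nia.
Qed.

Lemma card_AI s t : s != t -> (#|Aset' s :&: Aset' t| <= 96 * n)%N.
Proof.
move=> st.
have sub : Aset' s :&: Aset' t \subset finset.setX (finset.setX LT (Lst s t)) (Lst s t)
    :|: finset.setX (finset.setX (Lst s t) LT) (Lst s t)
    :|: finset.setX (finset.setX (Lst s t) (Lst s t)) LT.
  apply/fintype.subsetP => [[[a b] c]]; rewrite !inE /=.
  have ha : (a.1 == s) ==> (a.1 != t) by apply/implyP => /eqP ->.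
  have hb : (b.1 == s) ==> (b.1 != t) by apply/implyP => /eqP ->.
  have hc : (c.1 == s) ==> (c.1 != t) by apply/implyP => /eqP ->.
  move: ha hb hc; case: (a.1 == s); case: (a.1 == t);
  case: (b.1 == s); case: (b.1 == t); case: (c.1 == s); case: (c.1 == t);
  by rewrite /= ?andbF ?andbT ?orbT.
apply: (leq_trans (subset_leq_card sub)).
apply: (leq_trans (leq_card_setU _ _)).
rewrite -/(addn _ _); apply: leq_trans (leq_add (leq_card_setU _ _) (leqnn _)) _.
rewrite !cardX3 card_LT.
have := card_Lst s t; set k := #|Lst s t| => hk.
have e1 : (n * 2 * k * k <= n * 2 * 4 * 4)%N by rewrite leq_mul // leq_mul.
have e2 : (k * (n * 2) * k <= 4 * (n*2) * 4)%N by rewrite leq_mul // leq_mul.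
have e3 : (k * k * (n * 2) <= 4 * 4 * (n*2))%N by rewrite leq_mul // leq_mul.
nia.
Qed.
End Comb.
Section Fin.
Variable (R : realType) (n : nat) (p : R).
Local Notation C := (cands n).
Local Notation q := (1 - p).
Definition wt (J : {set word n}) : R := p ^+ #|J| * q ^+ (#|C| - #|J|).

Lemma key (D : {set word n}) : D \subset C ->
  \sum_(J : {set word n} | J \subset C) wt J * (J :&: D == finset.set0)%:R
  = q ^+ #|D|.
Proof.
move=> DC.
pose F := fun i : word n => if i \in C then (if i \in D then 0 else p) else 0.
pose G := fun i : word n => if i \in C then q else 1.
have L : \prod_i (F i + G i) = q ^+ #|D|.
  rewrite -prodr_const [RHS]big_mkcond /=; apply: eq_bigr => i _.
  rewrite /F /G; case: ifP => iC; case: ifP => iD //.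
  - by rewrite add0r.
  - by rewrite subrKC.
  - by rewrite (fintype.subsetP DC _ iD) in iC.
  - by rewrite add0r.
rewrite -L (bigA_distr _ _ F G) big_mkcond /=; apply: eq_bigr => J _.
have [JC|JnC] := boolP (J \subset C); last first.
  have [i iJ iC] : exists2 i, i \in J & i \notin C.
    exact/subsetPn.
  by rewrite (bigD1 i) //= iJ /F (negbTE iC) mul0r.
have [JD|JnD] := eqVneq (J :&: D) finset.set0; last first.
  case/set0Pn: JnD => i; rewrite inE => /andP[iJ iD].
  by rewrite (bigD1 i) //= iJ /F (fintype.subsetP JC _ iJ) iD mul0r mulr0.
rewrite mulr1 (bigID (fun i => i \in J)) /=.
have -> : \prod_(i | i \in J) (if i \in J then F i else G i) = p ^+ #|J|.
  rewrite -prodr_const; apply: eq_bigr => i iJ; rewrite iJ /F (fintype.subsetP JC _ iJ).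
  case: ifP => // iD; have : i \in J :&: D by rewrite inE iJ iD.
  by rewrite JD inE.
have -> : \prod_(i | i \notin J) (if i \in J then F i else G i)
          = \prod_(i | (i \notin J) && (i \in C)) q.
  rewrite big_mkcondr /=; apply: eq_bigr => i /negbTE ->.
  by rewrite /G.
rewrite prodr_const /wt; congr (_ * _ ^+ _).
have -> : #|J| = #|C :&: J| by rewrite (finset.setIidPr JC).
rewrite -cardsD; apply: eq_card => i.
by rewrite !inE [RHS]unfold_in /= inE.
Qed.

Local Notation Aset := (@Aset' n).
Definition Xv (J : {set word n}) : R := \sum_s (J :&: Aset s == finset.set0)%:R.

Lemma Aset_sub s : Aset s \subset C.
Proof. by apply/fintype.subsetP => w; rewrite inE => /andP[]. Qed.

Lemma Aset_subU s t : Aset s :|: Aset t \subset C.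
Proof. by rewrite finset.subUset !Aset_sub. Qed.

Lemma sum_wt : \sum_(J : {set word n} | J \subset C) wt J = 1.
Proof.
rewrite -(expr0 q) -(cards0 (word n)) -(key _ (finset.sub0set C)).
by apply: eq_bigr => J _; rewrite finset.setI0 eqxx mulr1.
Qed.

Lemma sum_wtX : \sum_(J : {set word n} | J \subset C) wt J * Xv J
   = \sum_s q ^+ #|Aset s|.
Proof.
under eq_bigr do rewrite /Xv big_distrr /=.
rewrite exchange_big /=; apply: eq_bigr => s _.
by rewrite -(key _ (Aset_sub s)).
Qed.

Lemma sum_wtX2 : \sum_(J : {set word n} | J \subset C) wt J * Xv J ^+ 2
   = \sum_s \sum_t q ^+ #|Aset s :|: Aset t|.
Proof.
under eq_bigr do rewrite /Xv expr2 big_distrlr big_distrr /=.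
rewrite exchange_big /=; apply: eq_bigr => s _.
under eq_bigr do rewrite big_distrr /=.
rewrite exchange_big /=; apply: eq_bigr => t _.
rewrite -(key _ (Aset_subU s t)); apply: eq_bigr => J _.
by rewrite finset.setIUr finset.setU_eq0 -natrM mulnb.
Qed.

Lemma notE_X (J : {set word n}) : J \subset C -> ~~ free_gen_event J -> Xv J = 0.
Proof.
move=> JC nE; rewrite /Xv big1 // => s _.
suff -> : (J :&: Aset s == finset.set0) = false by [].
apply/negbTE/set0Pn.
move: nE; rewrite /free_gen_event negb_exists => /forallP/(_ s).
rewrite negb_forall_in => /exists_inP[w wJ]; rewrite negbK => ow.
have := fintype.subsetP JC _ wJ; rewrite inE => wc.
by exists w; rewrite !inE wJ wc ow.
Qed.

Lemma moment (mu : R) : 0 <= p <= 1 -> mu = \sum_s q ^+ #|Aset s| -> 0 < mu ->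
  1 - prob_Gamma p (@free_gen_event n)
  <= (\sum_s \sum_t q ^+ #|Aset s :|: Aset t|) / mu ^+ 2 - 1.
Proof.
move=> /andP[p0 p1] mudef mu0.
have q0 : 0 <= q by rewrite subr_ge0.
have wt0 J : 0 <= wt J by rewrite /wt mulr_ge0 ?exprn_ge0.
have -> : 1 - prob_Gamma p (@free_gen_event n) =
  \sum_(J : {set word n} | J \subset C) wt J * (~~ free_gen_event J)%:R.
  rewrite -{1}sum_wt /prob_Gamma -sumrB; apply: eq_bigr => J _.
  by rewrite /wt; case: (free_gen_event J); rewrite /= ?mulr1 ?mulr0 ?subrr ?subr0.
have -> : (\sum_s \sum_t q ^+ #|Aset s :|: Aset t|) / mu ^+ 2 - 1 =
   \sum_(J : {set word n} | J \subset C) wt J * ((Xv J - mu) ^+ 2 / mu ^+ 2).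
  have mu2 : mu ^+ 2 != 0 by rewrite expf_neq0 // gt_eqF.
  rewrite -sum_wtX2.
  have -> : \sum_(J : {set word n} | J \subset C) wt J * ((Xv J - mu) ^+ 2 / mu ^+ 2)
    = (\sum_(J : {set word n} | J \subset C) wt J * Xv J ^+ 2
       - (mu *+ 2) * \sum_(J : {set word n} | J \subset C) wt J * Xv J
       + mu ^+ 2 * \sum_(J : {set word n} | J \subset C) wt J) / mu ^+ 2.
    rewrite !big_distrr /= -sumrB -big_split /= big_distrl /=.
    apply: eq_bigr => J _; rewrite /=; ring.
  rewrite sum_wtX sum_wt -mudef; by field; rewrite gt_eqF.
apply: ler_sum => J JC; apply: ler_wpM2l => //.
case E: (free_gen_event J) => /=; first by rewrite divr_ge0 ?sqr_ge0.
rewrite notE_X ?E // sub0r sqrrN divff // expf_neq0 // gt_eqF //.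
Qed.

Lemma S2_bound : 0 <= p <= 1 ->
  q ^+ (96 * n) * (\sum_s \sum_t q ^+ #|Aset s :|: Aset t|)
  <= (\sum_s q ^+ #|Aset s|) ^+ 2 + \sum_s q ^+ #|Aset s|.
Proof.
move=> /andP[p0 p1].
have q0 : 0 <= q by rewrite subr_ge0.
have q1 : q <= 1 by rewrite lerBlDr lerDl.
rewrite expr2 big_distrlr /= big_distrr /= -big_split /=.
apply: ler_sum => s _; rewrite big_distrr /=.
apply: (le_trans (y := \sum_t (q ^+ #|Aset s| * q ^+ #|Aset t|
                               + (s == t)%:R * q ^+ #|Aset s|))); last first.
  rewrite big_split /= lerD // (bigD1 s) //= eqxx mul1r big1 ?addr0 // => t.
  by rewrite eq_sym => /negbTE ->; rewrite mul0r.
apply: ler_sum => t _.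
have [<-|st] := eqVneq s t.
  rewrite finset.setUid mul1r -[X in X <= _]add0r lerD ?mulr_ge0 ?exprn_ge0 //.
  by rewrite ler_piMl ?exprn_ge0 ?exprn_ile1.
rewrite mul0r addr0 -!exprD; apply: ler_wiXn2l => //.
have := @card_AI n s t st; have := cardsUI (Aset s) (Aset t).
by move=> <- h; rewrite addnC leq_add2r.
Qed.

Lemma mu_lb : 0 <= p <= 1 ->
  n%:R * q ^+ (24 * n ^ 2) <= \sum_s q ^+ #|Aset s|.
Proof.
move=> /andP[p0 p1].
have q0 : 0 <= q by rewrite subr_ge0.
have q1 : q <= 1 by rewrite lerBlDr lerDl.
rewrite mulr_natl -[X in _ *+ X]card_ord -sumr_const; apply: ler_sum => s _.
by apply: ler_wiXn2l => //; apply: (@card_A n).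
Qed.

Lemma bernoulli k : 0 <= p <= 1 -> 1 - k%:R * p <= q ^+ k.
Proof.
move=> /andP[p0 p1]; elim: k => [|k IH]; first by rewrite mul0r subr0 expr0.
rewrite exprS.
have q0 : 0 <= q by rewrite subr_ge0.
apply: le_trans (ler_wpM2l q0 IH); rewrite -natr1.
have : 0 <= k%:R * p * p by rewrite mulr_ge0 ?mulr_ge0.
lra.
Qed.

Lemma prob_le1 : 0 <= p <= 1 -> 0 <= 1 - prob_Gamma p (@free_gen_event n).
Proof.
move=> /andP[p0 p1].
have q0 : 0 <= q by rewrite subr_ge0.
rewrite -{1}sum_wt /prob_Gamma -sumrB sumr_ge0 // => J _.
rewrite /wt; case: (free_gen_event J); rewrite /= ?mulr1 ?mulr0 ?subrr ?subr0 //.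
by rewrite mulr_ge0 ?exprn_ge0.
Qed.
End Fin.

Lemma bound_n (R : realType) (n : nat) (p : R) : (0 < n)%N -> 0 <= p ->
  p <= ln (n%:R) / (25 * (n%:R) ^+ 2) ->
  (400 : R) <= expR (ln (n%:R : R) / 50) ->
  0 <= 1 - prob_Gamma p (@free_gen_event n) <= 386 / expR (ln (n%:R : R) / 50).
Proof.
move=> n0 p0 hp.
set N : R := n%:R; set z := expR (ln N / 50) => z400.
have N1 : 1 <= N by rewrite /N ler1n.
have N0 : 0 < N by lra.
have z0 : 0 < z by rewrite expR_gt0.
have hz50 : z ^+ 50 = N.
  rewrite /z -expRM_natl mulrC divfK; last by rewrite pnatr_eq0.
  by rewrite lnK // posrE.
have lnN0 : 0 <= ln N by rewrite ln_ge0.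
have lnN : ln N <= 50 * z.
  have := ln_sublinear z0; rewrite /z expRK; lra.
have z2N : z ^+ 2 <= N by rewrite -hz50 ler_weXn2l //; lra.
have hp2 : 25 * N ^+ 2 * p <= ln N.
  by move: hp; rewrite ler_pdivlMr ?mulr_gt0 ?exprn_gt0 // mulrC.
set m := N * p.
have m0 : 0 <= m by rewrite mulr_ge0 //; lra.
have hm : 25 * N * m <= 50 * z.
  by apply: le_trans lnN; apply: le_trans hp2; rewrite /m expr2; lra.
have zm : z * m <= 2.
  have : 0 <= (N - z ^+ 2) * m by rewrite mulr_ge0 // subr_ge0.
  rewrite expr2 in z2N *; nra.
have pm : p <= m by rewrite /m ler_peMl.
have p1 : p <= 1 / 200 by nra.
set q := 1 - p.
have q0 : 0 < q by rewrite /q; lra.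
have pq1 : 0 <= p <= 1 by apply/andP; split; lra.
have F4 : expR (- (p / q)) <= q.
  have := expR_ge1Dx (p / q); set E := expR (p / q) => hE.
  have E0 : 0 < E by rewrite expR_gt0.
  have hx : expR (- (p / q)) * E = 1 by rewrite /E -expRD addNr expR0.
  have qE : 1 <= q * E.
    apply: le_trans (ler_wpM2l (ltW q0) hE).
    rewrite mulrDr mulr1 mulrCA divff ?gt_eqF // mulr1 /q; lra.
  have x0 : 0 < expR (- (p / q)) by rewrite expR_gt0.
  nra.
have mu_z : z <= \sum_s q ^+ #|Aset' n s|.
  apply: le_trans (@mu_lb _ n p pq1).
  have e1 : expR ((24 * n ^ 2)%:R * - (p / q)) <= q ^+ (24 * n ^ 2).
    rewrite expRM_natl; apply: lerXn2r => //; rewrite ?nnegrE ?expR_ge0 //; lra.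
  apply: le_trans (ler_wpM2l (ltW N0) e1).
  have e2 : - (49 / 50 * ln N) <= (24 * n ^ 2)%:R * - (p / q).
    rewrite natrM natrX -/N mulrN lerN2.
    rewrite mulrA ler_pdivrMr //.
    have : 0 <= (q - 199 / 200) * ln N by rewrite mulr_ge0 // /q; lra.
    have : 0 <= N ^+ 2 * p by rewrite mulr_ge0 ?exprn_ge0.
    move: hp2; set y := N ^+ 2 * p; rewrite -mulrA -/y.
    have -> : 24 * N ^+ 2 * p = 24 * y by rewrite /y mulrA.
    nra.
  apply: le_trans (ler_wpM2l (ltW N0) (_ : expR _ <= expR _)); last by rewrite ler_expR.
  rewrite /z -{2}(lnK (_ : N \in Num.pos)) ?posrE // -expRD.
  by rewrite ler_expR; lra.
have rz : 1 - 192 / z <= q ^+ (96 * n).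
  apply: (le_trans _ (@bernoulli _ p (96 * n) pq1)).
  rewrite natrM -/N -mulrA -/m.
  have : 96 * m <= 192 / z by rewrite ler_pdivlMr //; nra.
  lra.
apply/andP; split; first exact: (@prob_le1 _ n p pq1).
set mu := \sum_s q ^+ #|Aset' n s| in mu_z.
have mu0 : 0 < mu by lra.
apply: le_trans (@moment _ n p mu pq1 (erefl mu) mu0) _.
set S2 := \sum_s \sum_t _.
have hS := @S2_bound _ n p pq1; rewrite -/S2 -/mu in hS.
set r := q ^+ (96 * n) in rz hS.
set u := 1 / z.
have u0 : 0 < u by rewrite /u divr_gt0.
have uz : u * z = 1 by rewrite /u mul1r mulVf ?gt_eqF.
have u400 : u <= 1 / 400 by rewrite /u ler_pdivrMr // mulrC -ler_pdivrMr //; lra.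
have rz' : 1 - 192 * u <= r by rewrite /u mulrA mulr1.
have mu_u : 1 <= mu * u by nra.
have h1 : mu ^+ 2 + mu <= mu ^+ 2 * (1 + u) by rewrite expr2; nra.
have h2 : 1 + u <= r * (1 + 386 * u) by nra.
have r0 : 0 < r by nra.
have h3 : S2 <= mu ^+ 2 * (1 + 386 * u).
  rewrite -(ler_pM2l r0); apply: le_trans hS _; apply: le_trans h1 _.
  have m20 : 0 <= mu ^+ 2 by rewrite sqr_ge0.
  rewrite mulrCA; apply: ler_wpM2l => //.
rewrite (_ : 386 / z = 386 * u); last by rewrite /u mulrA mulr1.
rewrite lerBlDl ler_pdivrMr ?exprn_gt0 //; nra.
Qed.

Local Open Scope classical_set_scope.
Local Open Scope ring_scope.

Theorem lemma3p6 (R : realType) (p : nat -> R) :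
  (forall n, 0 <= p n) ->
  (forall n, p n <= ln (n%:R) / (25 * (n%:R) ^+ 2)) ->
  (fun n : nat => @prob_Gamma R n (p n) (@free_gen_event n)) @ \oo --> (1 : R).
Proof.
move=> p0 hp; apply/cvgrPdist_le => eps eps0.
set M : R := Num.max 400 (386 / eps).
have M400 : 400 <= M by rewrite le_max lexx.
have Me : 386 / eps <= M by rewrite le_max lexx orbT.
have M0 : 0 <= M by lra.
set N0 := Num.Def.archi_bound (M ^+ 50).
have hN0 : M ^+ 50 < N0%:R by apply: archi_boundP; rewrite exprn_ge0.
apply: filterS (nbhs_infty_ge N0.+1) => n hn.
have Mn : M ^+ 50 < n%:R.
  apply: lt_le_trans hN0 _; rewrite ler_nat; exact: ltnW.
have n0 : (0 < n)%N.
  rewrite lt0n; apply/negP => /eqP n0; move: Mn; rewrite n0.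
  have : 0 <= M ^+ 50 by rewrite exprn_ge0.
  lra.
set z := expR (ln (n%:R : R) / 50).
have z0 : 0 < z by rewrite expR_gt0.
have hz50 : z ^+ 50 = n%:R.
  rewrite /z -expRM_natl mulrC divfK; last by rewrite pnatr_eq0.
  by rewrite lnK // posrE ltr0n.
have Mz : M < z.
  by rewrite -(@ltr_pXn2r _ 50) ?nnegrE ?hz50 // ltW.
have := @bound_n R n (p n) n0 (p0 n) (hp n).
rewrite -/z => /(_ _)/andP[|h0 h1]; first lra.
rewrite ger0_norm //; apply: le_trans h1 _.
rewrite ler_pdivrMr //.
move: Me; rewrite ler_pdivrMr // => Me.
nra.
Qed.
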